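(* Let $Q$ be a finite connected quandle and $\alpha$ a congruence of $Q$. If $Q/\alpha$ is simply connected, then $\alpha=\mathcal{O}_{\mathrm{Dis}_\alpha}$ and $\mathrm{Dis}_\alpha=\mathrm{Dis}^\alpha$.
   Context: A quandle is a set $Q$ with a binary operation $*$ such that every left translation $L_x:y\mapsto x*y$ is bijective, $x*(y*z)=(x*y)*(x*z)$ and $x*x=x$; left division is $x\backslash y=L_x^{-1}(y)$. $\mathrm{LMlt}(Q)=\langle L_x:x\in Q\rangle$; $Q$ is connected if it is transitive. A congruence is an equivalence relation compatible with $*$ and $\backslash$. For a congruence $\alpha$: $\mathrm{Dis}_\alpha=\langle L_xL_y^{-1}: x\,\alpha\,y\rangle$; $\mathrm{Dis}(Q)=\langle L_xL_y^{-1}:x,y\in Q\rangle$; $\mathrm{LMlt}^\alpha$ is the kernel of the surjective group homomorphism $\mathrm{LMlt}(Q)\to\mathrm{LMlt}(Q/\alpha)$, $L_x\mapsto L_{[x]_\alpha}$; $\mathrm{Dis}^\alpha=\mathrm{LMlt}^\alpha\cap\mathrm{Dis}(Q)$. For a normal subgroup $N$ of $\mathrm{LMlt}(Q)$, $\mathcal{O}_N=\{(x,h(x)):x\in Q,h\in N\}$ (a congruence). For a set $S$, a quandle cocycle with values in $\mathrm{Sym}_S$ is $\theta:Q\times Q\to\mathrm{Sym}_S$ with $\theta_{x*y,x*z}\theta_{x,z}=\theta_{x,y*z}\theta_{y,z}$, $\theta_{x,x}=1$; it is cohomologous to the trivial cocycle if $\theta_{x,y}=\gamma_{x*y}\gamma_y^{-1}$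 for some $\gamma:Q\to\mathrm{Sym}_S$. A quandle is simply connected if it is connected and for every set $S$ every such cocycle is cohomologous to the trivial cocycle. *)

(* Defs.v *)
From mathcomp Require Import all_boot all_fingroup.
Set Implicit Arguments. Unset Strict Implicit. Unset Printing Implicit Defensive.

Section Magma.
Variables (T : finType) (op : T -> T -> T).

Definition is_quandle : Prop :=
  [/\ forall x, bijective (op x),
      forall x y z, op x (op y z) = op (op x y) (op x z)
    & forall x, op x x = x].

(* Left translation L_x as a permutation (identity fallback if op x is not
   injective, which never happens for a quandle). *)
Definition Lperm (x : T) : {perm T} := insubd (1%g : {perm T}) [ffun y => op x y].

Definition ldiv (x y : T) : T := (Lperm x)^-1%g y.

Definition LMlt : {set {perm T}} := <<[set Lperm x | x in T]>>%g.

Definition connected : Prop := forall x y : T, exists2 g, g \in LMlt & g x = y.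

(* Dis(Q) = < L_x L_y^{-1} >; in mathcomp (s * t) z = t (s z), so the
   function composition L_x o L_y^{-1} is written (L_y)^-1 * L_x. *)
Definition Dis : {set {perm T}} :=
  <<[set ((Lperm y)^-1 * Lperm x)%g | x in T, y in T]>>%g.

Record Sym (S : Type) := MkSym {
  sfun : S -> S; sinv : S -> S;
  sfunK : cancel sfun sinv; sinvK : cancel sinv sfun }.

Definition is_cocycle (S : Type) (theta : T -> T -> Sym S) : Prop :=
  (forall x y z s,
     sfun (theta (op x y) (op x z)) (sfun (theta x z) s)
     = sfun (theta x (op y z)) (sfun (theta y z) s))
  /\ (forall x s, sfun (theta x x) s = s).

Definition cohomologous_trivial (S : Type) (theta : T -> T -> Sym S) : Prop :=
  exists gamma : T -> Sym S, forall x y s,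
    sfun (theta x y) s = sfun (gamma (op x y)) (sinv (gamma y) s).

Definition simply_connected : Prop :=
  connected /\
  forall (S : Type) (theta : T -> T -> Sym S),
    is_cocycle theta -> cohomologous_trivial theta.

Definition orbrel (N : {set {perm T}}) (x y : T) : bool :=
  [exists h in N, h x == y].

End Magma.

Section Congruence.
Variables (Q : finType) (op : Q -> Q -> Q) (alpha : rel Q).

Definition congruence : Prop :=
  [/\ forall x, alpha x x,
      forall x y, alpha x y -> alpha y x,
      forall x y z, alpha x y -> alpha y z -> alpha x z,
      forall x x' y y', alpha x x' -> alpha y y' -> alpha (op x y) (op x' y')
    & forall x x' y y', alpha x x' -> alpha y y' ->
        alpha (ldiv op x y) (ldiv op x' y')].

(* The quotient Q/alpha: the set of alpha-classes. *)
Definition aclass (x : Q) : {set Q} := [set y | alpha x y].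

Definition qT := {A : {set Q} | [exists x, A == aclass x]}.

Lemma qpi_proof (x : Q) : [exists y, aclass x == aclass y].
Proof. by apply/existsP; exists x. Qed.

Definition qpi (x : Q) : qT := exist _ (aclass x) (qpi_proof x).

Definition qrep (A : qT) : Q := xchoose (existsP (valP A)).

Definition qop (A B : qT) : qT := qpi (op (qrep A) (qrep B)).

Definition Dis_a : {set {perm Q}} :=
  <<[set ((Lperm op y)^-1 * Lperm op x)%g | x in Q, y in Q & alpha x y]>>%g.

(* LMlt^alpha: kernel of LMlt(Q) -> LMlt(Q/alpha), L_x |-> L_[x], i.e. the
   elements of LMlt(Q) inducing the identity on Q/alpha. *)
Definition LMlt_up : {set {perm Q}} :=
  [set h in LMlt op | [forall x, alpha (h x) x]].

Definition Dis_up : {set {perm Q}} := (LMlt_up :&: Dis op)%g.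

End Congruence.

Arguments aclass {Q} alpha x.
Arguments qpi {Q} alpha x.
Arguments qrep {Q} alpha A.
Arguments qop {Q} op alpha A B.
Arguments congruence {Q} op alpha.
Arguments Dis_a {Q} op alpha.
Arguments LMlt_up {Q} op alpha.
Arguments Dis_up {Q} op alpha.

(* Main.v *)
Require Import Defs.
From mathcomp Require Import all_boot all_fingroup.
Set Implicit Arguments. Unset Strict Implicit. Unset Printing Implicit Defensive.
Set Warnings "-notation-overridden".

Lemma gen_closed (gT : finGroupType) (A B : {set gT}) :
  (1%g \in B) -> (forall x y, x \in B -> y \in B -> (x * y)%g \in B) ->
  A \subset B -> <<A>>%g \subset B.
Proof.
move=> B1 BM sAB.
have gB : group_set B by apply/group_setP; split=> // x y; apply: BM.
by rewrite -[B]/(gval (Group gB)) gen_subG.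
Qed.

Section Basic.
Variables (Q : finType) (op : Q -> Q -> Q).
Hypothesis hq : is_quandle op.
Local Open Scope group_scope.

Lemma op_inj x : injective (op x).
Proof. by case: hq => b _ _; apply: bij_inj. Qed.

Lemma LpermE x y : Lperm op x y = op x y.
Proof.
have inj : injectiveb [ffun y => op x y].
  by apply/injectiveP=> u v; rewrite !ffunE; apply: op_inj.
suff -> : Lperm op x = perm (@op_inj x) by rewrite permE.
apply/permP=> z; rewrite permE /Lperm.
by rewrite [@fun_of_perm]unlock insubdK // ffunE.
Qed.

Lemma ldivE x y : op x (ldiv op x y) = y.
Proof. by rewrite /ldiv -LpermE permKV. Qed.

Lemma ldivK x y : ldiv op x (op x y) = y.
Proof. by rewrite /ldiv -LpermE permK. Qed.

Lemma LM_L x : Lperm op x \in LMlt op.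
Proof. by apply: mem_gen; apply/imsetP; exists x. Qed.

Lemma LM_Lv x : (Lperm op x)^-1 \in LMlt op.
Proof. by rewrite groupV LM_L. Qed.

Lemma LpermJ x z : Lperm op x ^ Lperm op z = Lperm op (op z x).
Proof.
apply/permP=> w; rewrite conjgE !permM !LpermE.
rewrite -[(Lperm op z)^-1 w]/(ldiv op z w).
case: hq => _ hd _.
by rewrite hd ldivE.
Qed.

End Basic.

Section Cong.
Variables (Q : finType) (op : Q -> Q -> Q) (alpha : rel Q).
Hypothesis hq : is_quandle op.
Hypothesis hc : congruence op alpha.
Local Open Scope group_scope.

Lemma arefl x : alpha x x. Proof. by case: hc. Qed.
Lemma asym x y : alpha x y -> alpha y x. Proof. by case: hc => _ h _ _ _; apply: h. Qed.
Lemma atrans x y z : alpha x y -> alpha y z -> alpha x z.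
Proof. by case: hc => _ _ h _ _; apply: h. Qed.
Lemma aop x x' y y' : alpha x x' -> alpha y y' -> alpha (op x y) (op x' y').
Proof. by case: hc => _ _ _ h _; apply: h. Qed.
Lemma adiv x x' y y' : alpha x x' -> alpha y y' -> alpha (ldiv op x y) (ldiv op x' y').
Proof. by case: hc => _ _ _ _ h; apply: h. Qed.

Lemma LM_alpha g u v : g \in LMlt op -> alpha u v -> alpha (g u) (g v).
Proof.
move=> gL; move: u v.
suff : g \in [set g : {perm Q} | [forall u, [forall v, alpha u v ==> alpha (g u) (g v)]]].
  rewrite inE => /forallP h u v uv.
  by move: (h u) => /forallP /(_ v); rewrite uv.
apply: (subsetP _ _ gL); apply: gen_closed.
- by rewrite inE; apply/forallP=> u; apply/forallP=> v; rewrite !perm1; apply/implyP.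
- move=> a b; rewrite !inE => /forallP ha /forallP hb.
  apply/forallP=> u; apply/forallP=> v; apply/implyP=> uv; rewrite !permM.
  move/forallP: (hb (a u)) => /(_ (a v)) /implyP; apply.
  by move/forallP: (ha u) => /(_ v) /implyP; apply.
- apply/subsetP=> g' /imsetP [x _ ->]; rewrite inE.
  apply/forallP=> u; apply/forallP=> v; apply/implyP=> uv; rewrite !LpermE //.
  by apply: aop => //; apply: arefl.
Qed.

Lemma LM_alpha_eq g u v : g \in LMlt op -> alpha (g u) (g v) = alpha u v.
Proof.
move=> gL; apply/idP/idP; last exact: LM_alpha.
move=> h; have giL : g^-1 \in LMlt op by rewrite groupV.
by have := LM_alpha giL h; rewrite !permK.
Qed.

Lemma qrep_spec (A : qT alpha) : val A = aclass alpha (qrep alpha A).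
Proof. by apply/eqP; rewrite /qrep; apply: (xchooseP (existsP (valP A))). Qed.

Lemma qpiK (A : qT alpha) : qpi alpha (qrep alpha A) = A.
Proof. by apply: val_inj; rewrite /= -qrep_spec. Qed.

Lemma qpi_eq x y : alpha x y -> qpi alpha x = qpi alpha y.
Proof.
move=> xy; apply: val_inj => /=; apply/setP=> z; rewrite !inE.
apply/idP/idP=> h; first by apply: atrans (asym xy) h.
exact: atrans xy h.
Qed.

Lemma qpi_eqP x y : qpi alpha x = qpi alpha y -> alpha x y.
Proof.
move=> /(congr1 val) /= /setP /(_ y); rewrite !inE arefl; by move->.
Qed.

Lemma alpha_qrep x : alpha x (qrep alpha (qpi alpha x)).
Proof. by apply: qpi_eqP; rewrite qpiK. Qed.

Lemma qop_qpi x y : qop op alpha (qpi alpha x) (qpi alpha y) = qpi alpha (op x y).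
Proof.
by apply: qpi_eq; apply: aop; apply: asym; apply: alpha_qrep.
Qed.

Lemma qopE (a b : qT alpha) : qop op alpha a b = qpi alpha (op (qrep alpha a) (qrep alpha b)).
Proof. by []. Qed.

Notation N := (Dis_a op alpha).

Lemma N_gen x y : alpha x y -> (Lperm op y)^-1 * Lperm op x \in N.
Proof. by move=> xy; apply: mem_gen; apply/imset2P; exists x y; rewrite ?inE. Qed.

Lemma LM_norm : LMlt op \subset 'N(N).
Proof.
apply: gen_closed; rewrite ?group1 //; first by move=> x y; apply: groupM.
apply/subsetP=> g /imsetP [z _ ->].
apply: (subsetP (norms_gen _)); last by apply: set11.
rewrite sub1set inE sub_conjg; apply/subsetP=> h hA.
rewrite mem_conjg invgK.
case/imset2P: hA => x y _; rewrite inE => /andP [_ xy] ->.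
rewrite conjMg conjVg !LpermJ //.
apply/imset2P; exists (op z x) (op z y); rewrite ?inE //.
by apply: aop => //; apply: arefl.
Qed.

Lemma LM_normx g : g \in LMlt op -> g \in 'N(N).
Proof. by move=> gL; apply: (subsetP LM_norm). Qed.

End Cong.

Section Beta.
Variables (Q : finType) (op : Q -> Q -> Q) (alpha : rel Q).
Hypothesis hq : is_quandle op.
Hypothesis hc : congruence op alpha.
Local Open Scope group_scope.
Notation N := (Dis_a op alpha).
Notation beta := (orbrel N).

Lemma beta_refl u : beta u u.
Proof. by apply/existsP; exists 1; rewrite group1 perm1 eqxx. Qed.

Lemma beta_sym u v : beta u v -> beta v u.
Proof.
case/existsP=> h /andP [hN /eqP <-]; apply/existsP; exists h^-1.
by rewrite groupV hN permK eqxx.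
Qed.

Lemma beta_trans u v w : beta u v -> beta v w -> beta u w.
Proof.
case/existsP=> h /andP [hN /eqP <-]; case/existsP=> k /andP [kN /eqP <-].
by apply/existsP; exists (h * k); rewrite groupM // permM eqxx.
Qed.

Lemma beta_LM g u v : g \in LMlt op -> beta u v -> beta (g u) (g v).
Proof.
move=> gL; case/existsP=> h /andP [hN /eqP <-]; apply/existsP; exists (h ^ g).
rewrite memJ_norm ?hN; last exact: (LM_normx hq hc).
by rewrite conjgE !permM permK eqxx.
Qed.

Lemma beta_LM_eq g u v : g \in LMlt op -> beta (g u) (g v) = beta u v.
Proof.
move=> gL; apply/idP/idP; last exact: beta_LM.
move=> h; have giL : g^-1 \in LMlt op by rewrite groupV.
by have := beta_LM giL h; rewrite !permK.
Qed.

Lemma N_sub_H h : h \in N -> forall x, alpha (h x) x.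
Proof.
move=> hN.
suff : h \in [set h : {perm Q} | [forall x, alpha (h x) x]].
  by rewrite inE => /forallP.
apply: (subsetP _ _ hN); apply: gen_closed.
- by rewrite inE; apply/forallP=> u; rewrite perm1 (arefl hc).
- move=> a b; rewrite !inE => /forallP ha /forallP hb.
  apply/forallP=> u; rewrite permM; exact: (atrans hc (hb (a u)) (ha u)).
- apply/subsetP=> g /imset2P [x y _]; rewrite inE => /andP [_ xy] ->.
  rewrite inE; apply/forallP=> z; rewrite permM LpermE //.
  rewrite -{2}[z](ldivE hq y z).
  apply: (aop hc xy); exact: (arefl hc).
Qed.

Lemma beta_alpha u v : beta u v -> alpha u v.
Proof.
case/existsP=> h /andP [hN /eqP <-]; apply: (asym hc); exact: N_sub_H.
Qed.

Lemma beta_div u v z : alpha u v -> beta (ldiv op u z) (ldiv op v z).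
Proof.
move=> uv.
have b1 : beta z (op v (ldiv op u z)).
  apply/existsP; exists ((Lperm op u)^-1 * Lperm op v).
  rewrite (N_gen op (asym hc uv)) permM (LpermE hq).
  by apply/eqP.
have := beta_LM (LM_Lv op v) b1.
rewrite -[(Lperm op v)^-1 (op v _)]/(ldiv op v (op v _)) ldivK //.
by move/beta_sym.
Qed.

End Beta.

Section Part2.
Variables (Q : finType) (op : Q -> Q -> Q) (alpha : rel Q).
Hypothesis hq : is_quandle op.
Hypothesis hc : congruence op alpha.
Local Open Scope group_scope.
Notation N := (Dis_a op alpha).
Notation qQ := (qT alpha).
Notation qo := (qop op alpha).

Definition NG : {group {perm Q}} := [group of N].

Lemma coset_alpha u v : alpha u v -> coset N (Lperm op u) = coset N (Lperm op v).
Proof.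
move=> uv.
have nu := LM_normx hq hc (LM_L op u); have nv := LM_normx hq hc (LM_L op v).
apply/eqP; rewrite eq_mulVg1 -morphV // -morphM ?groupV //.
by apply/eqP; apply: coset_id; exact: (N_gen op (asym hc uv)).
Qed.

Definition lam (a : qQ) := coset N (Lperm op (qrep alpha a)).

Lemma lam_qpi z : lam (qpi alpha z) = coset N (Lperm op z).
Proof. by apply: coset_alpha; apply: (asym hc); apply: (alpha_qrep hc). Qed.

Lemma lam_qop a b : lam (qo a b) = lam b ^ lam a.
Proof.
rewrite qopE lam_qpi -(LpermJ hq) /lam morphJ //; apply: (LM_normx hq hc); apply: LM_L.
Qed.

Lemma theta2K (a b : qQ) : cancel (fun k : coset_of N => k * (lam b)^-1 * lam a)
                                   (fun k => k * (lam a)^-1 * lam b).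
Proof. by move=> k; rewrite mulgK mulgKV. Qed.

Lemma theta2Kv (a b : qQ) : cancel (fun k : coset_of N => k * (lam a)^-1 * lam b)
                                   (fun k => k * (lam b)^-1 * lam a).
Proof. by move=> k; rewrite mulgK mulgKV. Qed.

Definition theta2 (a b : qQ) : Defs.Sym (coset_of N) := MkSym (theta2K a b) (theta2Kv a b).

Lemma theta2_cocycle : is_cocycle qo theta2.
Proof.
split.
- move=> a b c k /=; rewrite !lam_qop !conjgE !invMg !invgK !mulgA.
  by rewrite !mulgK.
- by move=> a k /=; rewrite mulgKV.
Qed.

Lemma part2 (sc : forall (S : Type) (theta : qQ -> qQ -> Defs.Sym S),
                  is_cocycle qo theta -> cohomologous_trivial qo theta) :
  Dis_up op alpha \subset N.
Proof.
have [gam Hg] := sc _ _ theta2_cocycle.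
pose PH := [set h in LMlt op | [forall d, [forall k : coset_of N,
   k * coset N h == sfun (gam (qpi alpha (h d))) (sinv (gam (qpi alpha d)) k)]]].
have DisPH : Dis op \subset PH.
  apply: gen_closed.
  - rewrite inE group1; apply/forallP=> d; apply/forallP=> k.
    by rewrite morph1 mulg1 perm1 sinvK.
  - move=> h1 h2; rewrite !inE => /andP [h1L /forallP H1] /andP [h2L /forallP H2].
    rewrite groupM //; apply/forallP=> d; apply/forallP=> k.
    have n1 := LM_normx hq hc h1L; have n2 := LM_normx hq hc h2L.
    rewrite morphM // mulgA.
    move/forallP: (H1 d) => /(_ k) /eqP ->.
    move/forallP: (H2 (h1 d)) => /(_ (sfun (gam (qpi alpha (h1 d))) (sinv (gam (qpi alpha d)) k))) /eqP ->.
    by rewrite sfunK permM.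
  - apply/subsetP=> g /imset2P [x y _ _ ->].
    rewrite inE groupM ?LM_Lv ?LM_L //=.
    apply/forallP=> d; apply/forallP=> k.
    have nx := LM_normx hq hc (LM_L op x); have ny := LM_normx hq hc (LM_L op y).
    rewrite morphM ?groupV // morphV // permM (LpermE hq).
    rewrite -[(Lperm op y)^-1 d]/(ldiv op y d).
    set e := ldiv op y d.
    rewrite -[coset_morphism N (Lperm op y)]/(coset N (Lperm op y)) -[coset_morphism N (Lperm op x)]/(coset N (Lperm op x)) -!lam_qpi.
    set A := lam (qpi alpha x); set C := lam (qpi alpha y); set B := lam (qpi alpha e).
    pose s := k * C^-1 * B.
    have H1 := Hg (qpi alpha y) (qpi alpha e) s.
    have H2 := Hg (qpi alpha x) (qpi alpha e) s.
    rewrite /= -/A -/B -/C in H1 H2.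
    rewrite qop_qpi // ldivE // in H1.
    rewrite qop_qpi // in H2.
    have e1 : s * B^-1 * C = k by rewrite /s mulgK mulgKV.
    rewrite e1 in H1.
    have H3 : sinv (gam (qpi alpha d)) k = sinv (gam (qpi alpha e)) s.
      by rewrite {1}H1 sfunK.
    rewrite H3 -H2 /s mulgK; apply/eqP; by rewrite mulgA.
apply/subsetP=> h; rewrite !inE => /andP [/andP [hL /forallP hH] hD].
have /subsetP /(_ h hD) := DisPH.
rewrite inE => /andP [_ /forallP HP].
apply: (coset_idr (H := NG)); first exact: (LM_normx hq hc).
case: (pickP (fun _ : Q => true)) => [d _|Q0]; last first.
  have -> : h = 1 by apply/permP=> z; have := Q0 z.
  by rewrite morph1.
move/forallP: (HP d) => /(_ 1) /eqP.
rewrite mul1g (qpi_eq hc (hH d)) sinvK.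
by [].
Qed.

End Part2.

Section Part1.
Variables (Q : finType) (op : Q -> Q -> Q) (alpha : rel Q).
Hypothesis hq : is_quandle op.
Hypothesis hc : congruence op alpha.
Hypothesis hconn : connected op.
Variable e : Q.
Local Open Scope group_scope.
Notation N := (Dis_a op alpha).
Notation beta := (orbrel N).
Notation qQ := (qT alpha).
Notation qo := (qop op alpha).
Notation ra a := (qrep alpha a).

Fact ga_key : unit. Proof. by []. Qed.
Definition ga (a : qQ) : {perm Q} := locked_with ga_key (odflt 1 [pick g in LMlt op | g e == ra a]).

Lemma ga_spec a : ga a \in LMlt op /\ ga a e = ra a.
Proof.
rewrite /ga locked_withE; case: pickP => [g /andP [gL /eqP ->] //|none].
case: (hconn e (ra a)) => g gL ge.
by have := none g; rewrite gL ge eqxx.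
Qed.

Lemma gaL a : ga a \in LMlt op. Proof. by case: (ga_spec a). Qed.
Lemma gae a : ga a e = ra a. Proof. by case: (ga_spec a). Qed.

Fact tau_key : unit. Proof. by []. Qed.
Definition tau (a b : qQ) : {perm Q} := locked_with tau_key (ga (qo a b) * (Lperm op (ra a))^-1 * (ga b)^-1).

Lemma tauE a b y : tau a b y = (ga b)^-1 (ldiv op (ra a) (ga (qo a b) y)).
Proof. by rewrite /tau locked_withE !permM. Qed.

Lemma tauL a b : tau a b \in LMlt op.
Proof. by rewrite /tau locked_withE !groupM ?groupV ?gaL ?LM_L. Qed.

Lemma tau_e a b : alpha (tau a b e) e.
Proof.
rewrite -(LM_alpha_eq hq hc _ _ (gaL b)) tauE permKV gae.
rewrite gae; have -> : ra b = ldiv op (ra a) (op (ra a) (ra b)) by rewrite (ldivK hq).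
apply: (adiv hc); first exact: (arefl hc).
rewrite qopE; apply: (asym hc); exact: (alpha_qrep hc).
Qed.

Lemma cls_pres g y : g \in LMlt op -> alpha (g e) e -> alpha e (g y) = alpha e y.
Proof.
move=> gL ge; rewrite -(LM_alpha_eq hq hc e y gL).
apply/idP/idP => h; first exact: (atrans hc ge h).
exact: (atrans hc (asym hc ge) h).
Qed.

Lemma inv_e g : g \in LMlt op -> alpha (g e) e -> alpha (g^-1 e) e.
Proof.
move=> gL ge; have giL : g^-1 \in LMlt op by rewrite groupV.
by rewrite -(LM_alpha_eq hq hc _ _ gL) permKV; apply: (asym hc).
Qed.

Fact good_key : unit. Proof. by []. Qed.
Definition good (X : {set Q}) := locked_with good_key (
  (X \subset aclass alpha e) && [forall u, [forall v, beta u v ==> (u \in X) ==> (v \in X)]]).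

Lemma goodE X : good X = (X \subset aclass alpha e) &&
   [forall u, [forall v, beta u v ==> (u \in X) ==> (v \in X)]].
Proof. by rewrite /good locked_withE. Qed.

Lemma good_sub X y : good X -> y \in X -> alpha e y.
Proof. by rewrite goodE; case/andP=> /subsetP h _ /h; rewrite inE. Qed.

Lemma good_beta X u v : good X -> beta u v -> (u \in X) = (v \in X).
Proof.
rewrite goodE; case/andP=> _ /forallP h uv; apply/idP/idP.
  by move: (h u) => /forallP /(_ v); rewrite uv /= => /implyP.
by move: (h v) => /forallP /(_ u); rewrite (beta_sym uv) /= => /implyP.
Qed.

Fact pre_key : unit. Proof. by []. Qed.
Definition pre (g : {perm Q}) (X : {set Q}) := locked_with pre_key [set y | g y \in X].

Lemma preE g X y : (y \in pre g X) = (g y \in X).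
Proof. by rewrite /pre locked_withE inE. Qed.

Lemma good_pre g X : g \in LMlt op -> alpha (g e) e -> good X -> good (pre g X).
Proof.
move=> gL ge gX; rewrite goodE; apply/andP; split.
  apply/subsetP=> y; rewrite preE inE => /(good_sub gX).
  by rewrite cls_pres.
apply/forallP=> u; apply/forallP=> v; apply/implyP=> uv; rewrite !preE.
by rewrite (good_beta gX (beta_LM hq hc gL uv)); apply/implyP.
Qed.

Lemma good_tau a b X : good X -> good (pre (tau a b) X).
Proof. by apply: good_pre; [apply: tauL | apply: tau_e]. Qed.

Lemma good_tauV a b X : good X -> good (pre (tau a b)^-1 X).
Proof.
apply: good_pre; first by rewrite groupV tauL.
by apply: inv_e; [apply: tauL | apply: tau_e].
Qed.

Lemma theta1K a b : cancel (fun X => if good X then pre (tau a b) X else X)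
                            (fun X => if good X then pre (tau a b)^-1 X else X).
Proof.
move=> X; case: (boolP (good X)) => gX; last by rewrite !(negbTE gX).
rewrite good_tau //; apply/setP=> y; by rewrite !preE permKV.
Qed.

Lemma theta1Kv a b : cancel (fun X => if good X then pre (tau a b)^-1 X else X)
                             (fun X => if good X then pre (tau a b) X else X).
Proof.
move=> X; case: (boolP (good X)) => gX; last by rewrite !(negbTE gX).
rewrite good_tauV //; apply/setP=> y; by rewrite !preE permK.
Qed.

Definition theta1 (a b : qQ) : Defs.Sym {set Q} := MkSym (theta1K a b) (theta1Kv a b).

Lemma ldiv_dist a b w : ldiv op b (ldiv op a w) = ldiv op a (ldiv op (op a b) w).
Proof.
set z := ldiv op b (ldiv op a w).
have -> : w = op (op a b) (op a z).
  by case: hq => _ hd _; rewrite -hd /z !(ldivE hq).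
by rewrite !(ldivK hq).
Qed.

Lemma qo_dist a b c : qo (qo a b) (qo a c) = qo a (qo b c).
Proof.
rewrite [qo a b]qopE [qo a c]qopE [qo b c]qopE !(qop_qpi hc).
rewrite -[in RHS](qpiK a) (qop_qpi hc).
by case: hq => _ hd _; rewrite -hd.
Qed.

Lemma qo_idem a : qo a a = a.
Proof. rewrite qopE; case: hq => _ _ hi. by rewrite hi qpiK. Qed.

Lemma theta1_good a b X : good X -> sfun (theta1 a b) X = pre (tau a b) X.
Proof. by move=> gX /=; rewrite gX. Qed.

Lemma theta1_good2 a b c d X : good X ->
  sfun (theta1 a b) (sfun (theta1 c d) X) = pre (tau a b) (pre (tau c d) X).
Proof. move=> gX; rewrite (theta1_good c d gX) theta1_good //; exact: good_tau. Qed.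

Lemma tau_comp a b c y :
  beta (tau a c (tau (qo a b) (qo a c) y)) (tau b c (tau a (qo b c) y)).
Proof.
erewrite !tauE; erewrite !permKV; erewrite qo_dist.
apply: (beta_LM hq hc (groupVr (gaL c))).
erewrite (ldiv_dist (ra a) (ra b)).
apply: (beta_LM hq hc (LM_Lv op (ra a))).
apply: (beta_div hq hc).
rewrite qopE; apply: (asym hc); exact: (alpha_qrep hc).
Qed.

Lemma tau_cls a b y : alpha e (tau a b y) = alpha e y.
Proof. by apply: cls_pres; [apply: tauL | apply: tau_e]. Qed.

Lemma ldiv_idem z : ldiv op z z = z.
Proof.
case: hq => _ _ hi.
have H := ldivK hq z z.
by rewrite hi in H.
Qed.

Lemma tau_idem a y : alpha e y -> beta (tau a a y) y.
Proof.
move=> ey.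
erewrite tauE; erewrite qo_idem.
have Ha := LM_alpha hq hc (gaL a) ey.
rewrite gae in Ha.
have H := beta_div hq hc (ga a y) Ha.
erewrite ldiv_idem in H.
have H2 := beta_LM hq hc (groupVr (gaL a)) H.
rewrite permK in H2.
exact: H2.
Qed.

Lemma theta1_cocycle : is_cocycle qo theta1.
Proof.
split.
- move=> a b c X; case: (boolP (good X)) => gX; last by rewrite /= !(negbTE gX).
  erewrite (theta1_good2 (qo a b) (qo a c) a c gX), (theta1_good2 a (qo b c) b c gX).
  apply/setP=> y; erewrite !preE.
  apply: good_beta => //; exact: tau_comp.
- move=> a X; case: (boolP (good X)) => gX; last by rewrite /= !(negbTE gX).
  erewrite (theta1_good a a gX).
  apply/setP=> y; erewrite preE.
  case: (boolP (alpha e y)) => ey.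
    by apply: good_beta => //; exact: tau_idem.
  have yX : (y \in X) = false.
    by apply/negbTE; apply: contra ey; apply: good_sub.
  have tX : (tau a a y \in X) = false.
    apply/negbTE; apply: contra ey => h.
    by have := good_sub gX h; rewrite tau_cls.
  by erewrite yX, tX.
Qed.

Fact F_key : unit. Proof. by []. Qed.
Definition Fset (y : Q) : {set Q} := locked_with F_key [set u | beta (ga (qpi alpha y) u) y].

Lemma FsetE y u : (u \in Fset y) = beta (ga (qpi alpha y) u) y.
Proof. by rewrite /Fset locked_withE inE. Qed.

Lemma good_F y : good (Fset y).
Proof.
rewrite goodE; apply/andP; split.
  apply/subsetP=> u; rewrite FsetE inE => /(beta_alpha hq hc) h.
  have h2 := alpha_qrep hc y.
  rewrite -gae in h2.
  have h3 := atrans hc h h2.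
  rewrite (LM_alpha_eq hq hc _ _ (gaL _)) in h3.
  exact: (asym hc h3).
apply/forallP=> u; apply/forallP=> v; apply/implyP=> uv; rewrite !FsetE; apply/implyP=> h.
apply: beta_trans h; apply: beta_sym; exact: (beta_LM hq hc (gaL _) uv).
Qed.

Lemma beta_eq_l u u' v : beta u u' -> beta u v = beta u' v.
Proof.
move=> uu'; apply/idP/idP => h.
  exact: beta_trans (beta_sym uu') h.
exact: beta_trans uu' h.
Qed.

Lemma theta_F x y : sfun (theta1 (qpi alpha x) (qpi alpha y)) (Fset y) = Fset (op x y).
Proof.
erewrite theta1_good; last exact: good_F.
apply/setP=> u; erewrite preE; erewrite !FsetE; erewrite tauE; erewrite permKV.
erewrite (qop_qpi hc).
generalize (ga (qpi alpha (op x y)) u); intros w.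
rewrite (beta_eq_l _ (beta_div hq hc w (asym hc (alpha_qrep hc x)))).
by rewrite -(beta_LM_eq hq hc _ _ (LM_L op x)) !(LpermE hq) ldivE.
Qed.

Lemma part1_e (sc : forall (S : Type) (theta : qQ -> qQ -> Defs.Sym S),
                  is_cocycle qo theta -> cohomologous_trivial qo theta) y :
  alpha e y -> beta e y.
Proof.
have [gam Hg] := sc _ _ theta1_cocycle.
pose Phi z := sinv (gam (qpi alpha z)) (Fset z).
have inv1 : forall x z, Phi (op x z) = Phi z.
  move=> x z; rewrite /Phi; have := Hg (qpi alpha x) (qpi alpha z) (Fset z).
  by rewrite theta_F (qop_qpi hc) => ->; rewrite sfunK.
have invL : forall g, g \in LMlt op -> forall z, Phi (g z) = Phi z.
  move=> g gL.
  suff : g \in [set g : {perm Q} | [forall z, Phi (g z) == Phi z]].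
    by rewrite inE => /forallP h z; apply/eqP.
  apply: (subsetP _ _ gL); apply: gen_closed.
  - by rewrite inE; apply/forallP=> z; rewrite perm1.
  - move=> g1 g2; rewrite !inE => /forallP h1 /forallP h2; apply/forallP=> z.
    by rewrite permM (eqP (h2 _)) (eqP (h1 _)).
  - apply/subsetP=> g' /imsetP [x _ ->]; rewrite inE; apply/forallP=> z.
    by rewrite (LpermE hq) inv1.
move=> ey; case: (hconn e y) => g gL gy.
have H0 := invL g gL e.
rewrite gy /Phi (qpi_eq hc (asym hc ey)) in H0.
have FF := can_inj (sinvK _) H0.
have := FsetE e ((ga (qpi alpha e))^-1 e).
rewrite permKV beta_refl -FF FsetE (qpi_eq hc (asym hc ey)) permKV.
by move->.
Qed.

End Part1.

Unset Implicit Arguments.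
Set Strict Implicit.

Theorem proposition3p5 (Q : finType) (op : Q -> Q -> Q) (alpha : rel Q) :
  is_quandle op -> connected op -> congruence op alpha ->
  simply_connected (qop op alpha) ->
  (forall x y, alpha x y = orbrel (Dis_a op alpha) x y) /\
  Dis_a op alpha = Dis_up op alpha.
Proof.
move=> hq hconn hc [_ sc]; split.
  move=> x y; apply/idP/idP; first exact: (part1_e hq hc hconn sc).
  exact: (beta_alpha hq hc).
apply/eqP; rewrite eqEsubset; apply/andP; split; last exact: (part2 hq hc sc).
apply/subsetP=> h hN; rewrite /Dis_up inE; apply/andP; split.
  rewrite /LMlt_up inE; apply/andP; split.
    apply: (subsetP _ _ hN); rewrite gen_subG; apply/subsetP=> g.
    case/imset2P=> x y _ _ ->; by rewrite groupM ?LM_Lv ?LM_L.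
  by apply/forallP; apply: (N_sub_H hq hc).
apply: (subsetP _ _ hN); apply: genS; apply/subsetP=> g.
case/imset2P=> x y _ _ ->; apply/imset2P; exists x y; by rewrite ?inE.
Qed.
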